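(* Let $G$ be a connected graph, $v\in V(G)$, and let $G_v$ be the graph obtained from $G$ by adding a new vertex $v'$ adjacent to $v$ and to all vertices of $N_G(v)$. Let $j\in\{1,2\}$. Then the subgraph of $\mathcal{R}(G_v)$ induced by $\{T(0,j)\mid T\in V(\mathcal{R}(G))\}$ is isomorphic to $\mathcal{R}(G)$.
   Context: For a connected graph $G$, a search tree on $G$ is a rooted tree with vertex set $V(G)$ defined recursively: its root is some vertex $r\in V(G)$, and the children of $r$ are the roots of search trees on the connected components of $G-r$. For a rooted tree $T$ and $w\in V(T)$, $T|w$ denotes the subtree rooted at $w$. Let $T$ be a search tree on $G$, let $b$ be a child of $a$ in $T$, and let $p$ be the parent of $a$ (if it exists). The $ab$-rotation transforms $T$ into the search tree $T'$ in which: $a$ is a child of $b$ and $b$ is a child of $p$ (or $b$ is the root if $a$ was the root); every subtree of $a$ in $T$ other than $T|b$ is a subtree of $a$ in $T'$; and every subtree $S$ of $b$ in $T$ is a subtree of $a$ in $T'$ if $a$ is adjacent in $G$ to some vertex of $S$, and a subtree of $b$ in $T'$ otherwise. The rotation graph $\mathcal{R}(G)$ has the search trees on $G$ as vertices, two adjacent iff they differ by one rotation. For a search tree $T$ on $G$: $T(0,1)$ is the rooted tree with root $v'$ whose only subtree is $T$; $T(0,2)$ is the rooted tree with root $v$ whose only subtree is the tree obtained from $T$ by renaming $v$ as $v'$. *)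

(* Defs.v *)
From mathcomp Require Import all_boot.
Set Implicit Arguments. Unset Strict Implicit. Unset Printing Implicit Defensive.

Section Defs.
Variable V : finType.

(* A graph on V is given by an adjacency relation e (assumed symmetric and
   irreflexive in the theorem). *)

Definition induced (e : rel V) (A : {set V}) : rel V :=
  [rel x y | [&& x \in A, y \in A & e x y]].

Definition connected_on (e : rel V) (A : {set V}) : bool :=
  [forall x in A, forall y in A, connect (induced e A) x y].

Definition comp (e : rel V) (A : {set V}) (x : V) : {set V} :=
  [set y in A | connect (induced e A) x y].

(* A rooted tree on vertex set V is encoded by its parent function:
   f x = None iff x is the root, f x = Some y iff y is the parent of x.
   st_on e S par f : the restriction of f to S is a search tree on G[S]
   whose root has parent par (recursive definition of search trees:
   root r in S, and the children of r are the roots of search trees on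
   the connected components of G[S] - r). *)
Inductive st_on (e : rel V) : {set V} -> option V -> (V -> option V) -> Prop :=
| st_intro (S : {set V}) (par : option V) (f : V -> option V) (r : V) :
    r \in S -> connected_on e S -> f r = par ->
    (forall x, x \in S :\ r -> st_on e (comp e (S :\ r) x) (Some r) f) ->
    st_on e S par f.

Definition search_tree (e : rel V) (f : {ffun V -> option V}) : Prop :=
  st_on e setT None f.

Definition parent_rel (f : {ffun V -> option V}) : rel V :=
  [rel x y | f x == Some y].

Definition subtree (f : {ffun V -> option V}) (c : V) : {set V} :=
  [set y | connect (parent_rel f) y c].

(* the ab-rotation (b a child of a) *)
Definition rotate (e : rel V) (f : {ffun V -> option V}) (a b : V)
  : {ffun V -> option V} :=
  [ffun x => if x == b then f a
             else if x == a then Some b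
             else if f x == Some b then
               (if [exists y in subtree f x, e a y] then Some a else Some b)
             else f x].

Definition rot_step (e : rel V) (f g : {ffun V -> option V}) : Prop :=
  exists a b, f b = Some a /\ g = rotate e f a b.

Definition rot_adj (e : rel V) (f g : {ffun V -> option V}) : Prop :=
  search_tree e f /\ search_tree e g /\ (rot_step e f g \/ rot_step e g f).

(* G_v : new vertex v' = None, adjacent to v and to N_G(v) *)
Definition add_twin (e : rel V) (v : V) : rel (option V) :=
  fun x y => match x, y with
  | Some x, Some y => e x y
  | None, Some y => (y == v) || e v y
  | Some x, None => (x == v) || e v x
  | None, None => false
  end.

(* T(0,1): root v' with single subtree T *)
Definition T01 (f : {ffun V -> option V}) : {ffun option V -> option (option V)} :=
  [ffun x => match x with None => None | Some x => Some (f x) end].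

(* T(0,2): root v with single subtree T in which v is renamed v' *)
Definition ren (v x : V) : option V := if x == v then None else Some x.

Definition T02 (v : V) (f : {ffun V -> option V}) : {ffun option V -> option (option V)} :=
  let h x := match f x with None => Some (Some v) | Some y => Some (ren v y) end in
  [ffun x => match x with
             | None => h v
             | Some x => if x == v then None else h x end].

Definition T0j (j : nat) (v : V) (f : {ffun V -> option V}) :=
  if j == 1 then T01 f else T02 v f.

End Defs.

(* Main.v *)
Require Import Defs.
From mathcomp Require Import all_boot.
Set Implicit Arguments. Unset Strict Implicit. Unset Printing Implicit Defensive.


Section Lift.
Variables (V W : finType) (e : rel V) (E : rel W) (i : V -> W) (rho : W).
Hypothesis i_inj : injective i.
Hypothesis i_rho : forall x, i x != rho.
Hypothesis cover : forall w, w = rho \/ exists x, w = i x.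
Hypothesis Ei : forall x y, E (i x) (i y) = e x y.

Lemma rho_notin (A : {set V}) : (rho \in i @: A) = false.
Proof. by apply/negbTE/imsetP => -[x _ hx]; move: (i_rho x); rewrite hx eqxx. Qed.

Lemma connect_lift (r : rel V) (R : rel W) :
  (forall x y, R (i x) (i y) = r x y) -> (forall w, R rho w = false) ->
  forall x y, connect R (i x) (i y) = connect r x y.
Proof.
move=> Hr Hrho x y; apply/idP/idP.
- case/connectP=> p; elim: p x => [|w p IH] x /=.
    by move=> _ /i_inj ->.
  case/andP=> hw hp hl; case: (cover w) => [hw0|[z hz]].
    subst w; case: p hp hl {IH} => [|w' p] /=.
      by move=> _ h; move: (i_rho y); rewrite h eqxx.
    by rewrite Hrho.
  subst w; rewrite Hr in hw; apply: connect_trans (connect1 hw) _; exact: IH.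
- case/connectP=> p; elim: p x => [|z p IH] x /=; first by move=> _ ->.
  case/andP=> hz hp hl; apply: (connect_trans (y := i z)).
    by apply: connect1; rewrite Hr.
  exact: IH.
Qed.

Lemma connect_from_dead (R : rel W) w :
  (forall w', R rho w' = false) -> connect R rho w = (w == rho).
Proof.
move=> H; apply/idP/idP; last by move/eqP->.
case/connectP=> [[|a p]] /=; first by move=> _ ->.
by rewrite H.
Qed.

Definition liftv (o : option V) : W := if o is Some y then i y else rho.

Definition lifted (f : {ffun V -> option V}) (F : {ffun W -> option W}) :=
  F rho = None /\ forall x, F (i x) = Some (liftv (f x)).

Lemma liftv_inj : injective liftv.
Proof.
move=> [a|] [b|] //= h.
- by rewrite (i_inj h).
- by move: (i_rho a); rewrite h eqxx.
- by move: (i_rho b); rewrite h eqxx.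
Qed.

Lemma lifted_inj f g F : lifted f F -> lifted g F -> f = g.
Proof.
move=> [_ Hf] [_ Hg]; apply/ffunP => x.
by have := Hf x; rewrite Hg => -[/liftv_inj].
Qed.

Lemma induced_lift (A : {set V}) x y :
  induced E (i @: A) (i x) (i y) = induced e A x y.
Proof. by rewrite /induced /= !mem_imset // Ei. Qed.

Lemma induced_rho (A : {set V}) w : induced E (i @: A) rho w = false.
Proof. by rewrite /induced /= rho_notin. Qed.

Lemma comp_lift (A : {set V}) x : Defs.comp E (i @: A) (i x) = i @: (Defs.comp e A x).
Proof.
apply/setP => w; case: (cover w) => [->|[y ->]].
  by rewrite !inE rho_notin rho_notin.
rewrite !inE mem_imset // mem_imset // inE.
by rewrite (connect_lift (induced_lift A) (induced_rho A)).
Qed.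

Lemma imsetD1_inj (S : {set V}) r : (i @: S) :\ i r = i @: (S :\ r).
Proof.
apply/setP => w; case: (cover w) => [->|[y ->]].
  by rewrite !inE !rho_notin andbF.
by rewrite !inE !mem_imset // !inE (inj_eq i_inj).
Qed.

Lemma st_lift S par (f : V -> option V) (F : W -> option W) : st_on e S par f ->
  (forall x, F (i x) = Some (liftv (f x))) ->
  st_on E (i @: S) (Some (liftv par)) F.
Proof.
elim=> {par f} S par f r rS cS fr _ IH HF.
apply: (st_intro (r := i r)).
- by rewrite mem_imset.
- apply/forallP => w1; apply/implyP => /imsetP[x1 x1S ->].
  apply/forallP => w2; apply/implyP => /imsetP[x2 x2S ->].
  rewrite (connect_lift (induced_lift S) (induced_rho S)).
  by move/forallP: cS => /(_ x1); rewrite x1S => /forallP/(_ x2); rewrite x2S.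
- by rewrite HF fr.
- move=> w; rewrite imsetD1_inj => /imsetP[x xS ->].
  rewrite comp_lift; exact: IH.
Qed.

Lemma connect_up (r : rel V) (R : rel W) :
  (forall x y, r x y -> R (i x) (i y)) ->
  forall x y, connect r x y -> connect R (i x) (i y).
Proof.
move=> Hr x y; case/connectP=> p; elim: p x => [|z p IH] x /=; first by move=> _ ->.
case/andP=> hz hp hl; apply: (connect_trans (y := i z)).
  by apply: connect1; apply: Hr.
exact: IH.
Qed.

Lemma setD1_rho : setT :\ rho = i @: setT.
Proof.
apply/setP => w; case: (cover w) => [->|[y ->]].
  by rewrite !inE rho_notin eqxx.
by rewrite !inE mem_imset // inE i_rho.
Qed.

Lemma search_lift (v0 : V) (Erv : E rho (i v0)) (Evr : E (i v0) rho)
  (G_conn : forall x y, connect e x y) f F :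
  search_tree e f -> lifted f F -> search_tree E F.
Proof.
move=> Hs [HF0 HF]; apply: (st_intro (r := rho)) => //.
- apply/forallP => w1; apply/implyP => _; apply/forallP => w2; apply/implyP => _.
  have HE : induced E setT =2 E by move=> a b; rewrite /induced /= !inE.
  rewrite (eq_connect HE).
  have Hii : forall x y, connect E (i x) (i y).
    move=> x y; apply: (connect_up (r := e)) (G_conn x y) => a b; by rewrite Ei.
  have Hri : forall y, connect E rho (i y).
    by move=> y; apply: connect_trans (connect1 Erv) (Hii _ _).
  have Hir : forall y, connect E (i y) rho.
    by move=> y; apply: connect_trans (Hii _ _) (connect1 Evr).
  case: (cover w1) => [->|[x1 ->]]; case: (cover w2) => [->|[x2 ->]] //.
- move=> w; rewrite setD1_rho => /imsetP[x _ ->].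
  rewrite comp_lift.
  have -> : Defs.comp e setT x = setT.
    apply/setP => y; rewrite !inE /=.
    have HE : induced e setT =2 e by move=> a b; rewrite /induced /= !inE.
    by rewrite (eq_connect HE) G_conn.
  exact: (st_lift Hs HF).
Qed.

Lemma parent_lift f F : lifted f F ->
  forall x y, parent_rel F (i x) (i y) = parent_rel f x y.
Proof.
move=> [_ HF] x y; rewrite /parent_rel /= HF.
case: (f x) => [z|] /=; first by rewrite !(inj_eq (@Some_inj _)) (inj_eq i_inj).
by apply/negbTE; rewrite eq_sym; apply/eqP => -[] /eqP; rewrite (negbTE (i_rho y)).
Qed.

Lemma subtree_lift f F : lifted f F -> forall x, subtree F (i x) = i @: subtree f x.
Proof.
move=> HL x; have Hrho : forall w, parent_rel F rho w = false.
  by move=> w; rewrite /parent_rel /= HL.1.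
apply/setP => w; case: (cover w) => [->|[y ->]].
  by rewrite rho_notin inE connect_from_dead //; apply/negbTE; exact: i_rho.
by rewrite mem_imset // !inE (connect_lift (parent_lift HL) Hrho).
Qed.

Lemma exists_lift (A : {set V}) a :
  [exists y in i @: A, E (i a) y] = [exists y in A, e a y].
Proof.
apply/existsP/existsP => [[w /andP[/imsetP[y yA ->]]]|[y /andP[yA h]]].
  by rewrite Ei => h; exists y; rewrite yA.
by exists (i y); rewrite mem_imset // yA Ei.
Qed.

Lemma rotate_lift f F a b : lifted f F ->
  lifted (rotate e f a b) (rotate E F (i a) (i b)).
Proof.
move=> HL; have [HF0 HF] := HL; split.
  by rewrite ffunE eq_sym (negbTE (i_rho b)) eq_sym (negbTE (i_rho a)) HF0.
move=> x; rewrite !ffunE !(inj_eq i_inj).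
case: eqP => _; first by rewrite HF.
case: eqP => _ //.
have -> : (F (i x) == Some (i b)) = (f x == Some b).
  by have := parent_lift HL x b; rewrite /parent_rel /=.
case: eqP => _; last by rewrite HF.
by rewrite (subtree_lift HL) exists_lift; case: ifP.
Qed.

Lemma lifted_uniq f F G : lifted f F -> lifted f G -> F = G.
Proof.
move=> [HF0 HF] [HG0 HG]; apply/ffunP => w.
by case: (cover w) => [->|[x ->]]; rewrite ?HF0 ?HG0 ?HF ?HG.
Qed.

Lemma rot_step_lift f1 f2 F1 F2 : lifted f1 F1 -> lifted f2 F2 ->
  rot_step e f1 f2 <-> rot_step E F1 F2.
Proof.
move=> H1 H2; split.
  case=> a [b [hb hf2]]; subst f2; exists (i a), (i b); split.
    by rewrite H1.2 hb.
  exact: lifted_uniq H2 (rotate_lift a b H1).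
case=> a [b [hb hF2]].
case: (cover b) => [hb0|[b' hb']]; first by rewrite hb0 H1.1 in hb.
subst b; move: hb; rewrite H1.2 => -[ha].
case E1 : (f1 b') ha => [a'|] /= ha; subst a.
  exists a', b'; split => //.
  apply: lifted_inj H2 _; rewrite hF2; exact: rotate_lift.
move: H2.1; rewrite hF2 ffunE eq_sym (negbTE (i_rho b')) eqxx //.
Qed.

Lemma rot_adj_lift (v0 : V) (Erv : E rho (i v0)) (Evr : E (i v0) rho)
  (G_conn : forall x y, connect e x y) f1 f2 F1 F2 :
  search_tree e f1 -> search_tree e f2 -> lifted f1 F1 -> lifted f2 F2 ->
  (rot_adj e f1 f2 <-> rot_adj E F1 F2).
Proof.
move=> S1 S2 H1 H2; rewrite /rot_adj.
have := rot_step_lift H1 H2; have := rot_step_lift H2 H1.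
have := search_lift Erv Evr G_conn S1 H1; have := search_lift Erv Evr G_conn S2 H2.
tauto.
Qed.


Lemma main_lift (v0 : V) (Erv : E rho (i v0)) (Evr : E (i v0) rho)
  (G_conn : forall x y, connect e x y)
  (L : {ffun V -> option V} -> {ffun W -> option W}) (HL : forall f, lifted f (L f)) :
  (forall T, search_tree e T -> search_tree E (L T)) /\
  exists phi : {ffun V -> option V} -> {ffun W -> option W},
    [/\ (forall T, search_tree e T -> exists T0, search_tree e T0 /\ phi T = L T0),
        (forall U, (exists T0, search_tree e T0 /\ U = L T0) ->
           exists T, search_tree e T /\ phi T = U),
        (forall T1 T2, search_tree e T1 -> search_tree e T2 -> phi T1 = phi T2 -> T1 = T2)
      & (forall T1 T2, search_tree e T1 -> search_tree e T2 ->
           (rot_adj e T1 T2 <-> rot_adj E (phi T1) (phi T2)))].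
Proof.
split; first by move=> T ST; apply: (search_lift Erv Evr G_conn ST (HL T)).
exists L; split.
- by move=> T ST; exists T.
- by move=> U [T0 [ST ->]]; exists T0.
- move=> T1 T2 _ _ h; apply: (lifted_inj (HL T1)); rewrite h; exact: HL.
- move=> T1 T2 S1 S2; apply: (rot_adj_lift Erv Evr G_conn S1 S2 (HL T1) (HL T2)).
Qed.

End Lift.


Theorem proposition2p9 (V : finType) (e : rel V)
  (e_sym : symmetric e) (e_irr : irreflexive e)
  (G_conn : forall x y : V, connect e x y)
  (v : V) (j : nat) (hj : (j == 1) || (j == 2)) :
  (forall T, search_tree e T -> search_tree (add_twin e v) (T0j j v T)) /\
  exists phi : {ffun V -> option V} -> {ffun option V -> option (option V)},
    [/\ (forall T, search_tree e T -> exists T0, search_tree e T0 /\ phi T = T0j j v T0),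
        (forall U, (exists T0, search_tree e T0 /\ U = T0j j v T0) ->
           exists T, search_tree e T /\ phi T = U),
        (forall T1 T2, search_tree e T1 -> search_tree e T2 -> phi T1 = phi T2 -> T1 = T2)
      & (forall T1 T2, search_tree e T1 -> search_tree e T2 ->
           (rot_adj e T1 T2 <-> rot_adj (add_twin e v) (phi T1) (phi T2)))].
Proof.
case/orP: hj => /eqP ->.
- apply: (@main_lift V _ e (add_twin e v) Some None _ _ _ _ v _ _ G_conn (T0j 1 v)).
  + by move=> a b [].
  + by [].
  + by case=> [x|]; [right; exists x | left].
  + by [].
  + by rewrite /= eqxx.
  + by rewrite /= eqxx.
  + move=> f; split; first by rewrite /T0j /T01 ffunE.
    by move=> x; rewrite /T0j /T01 ffunE; case: (f x).
- apply: (@main_lift V _ e (add_twin e v) (ren v) (Some v) _ _ _ _ v _ _ G_conn (T0j 2 v)).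
  + move=> a b; rewrite /ren; case: eqP => [->|_]; case: eqP => [->|_] //.
    by move=> [->].
  + move=> x; case: (eqVneq x v) => [->|h]; rewrite /ren ?eqxx // (negbTE h).
    by apply: contra h => /eqP [->].
  + case=> [x|]; last by right; exists v; rewrite /ren eqxx.
    case: (eqVneq x v) => [->|h]; first by left.
    by right; exists x; rewrite /ren (negbTE h).
  + move=> x y; case: (eqVneq x v) => [->|hx]; case: (eqVneq y v) => [->|hy];
      rewrite /ren ?eqxx ?(negbTE hx) ?(negbTE hy) /=.
    * by rewrite e_irr.
    * by rewrite (negbTE hy).
    * by rewrite (negbTE hx) e_sym.
    * by [].
  + by rewrite /ren eqxx /= eqxx.
  + by rewrite /ren eqxx /= eqxx.
  + move=> f; split; first by rewrite /T0j /T02 ffunE eqxx.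
    move=> x; rewrite /T0j /T02 ffunE /ren.
    by case: (eqVneq x v) => [->|h] /=; rewrite ?eqxx ?(negbTE h); case: (f _).
Qed.
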